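(* Let $\alpha\in\mathbb R^+$, let $q$ be a prime power, and let $n,h,k\in\mathbb Z^+$ satisfy $n\ge(2+k)h+\log_q(2/\alpha)$ and $k\ge 2q^h(1/\alpha-1)$. If $M$ is a $\mathrm{GF}(q)$-representable matroid of rank $r\ge n$ with $\epsilon(M)\ge\alpha\frac{q^r-1}{q-1}$, then for each independent set $C$ of $M$ of rank $hk$, there exists $C'\subseteq C$ such that $M/C'$ has a restriction isomorphic to $\mathrm{AG}(h,q)$.
   Context: $\epsilon(M)$ denotes the number of elements of the simplification of $M$ (the number of rank-one flats). $\frac{q^r-1}{q-1}=|\mathrm{PG}(r-1,q)|$. *)

(* Defs.v *)
From HB Require Import structures.
From mathcomp Require Import all_boot all_order all_algebra.
Set Implicit Arguments. Unset Strict Implicit. Unset Printing Implicit Defensive.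
Import GRing.Theory.

Record matroid (E : finType) := Matroid {
  mrank :> {set E} -> nat;
  mrank_card : forall X : {set E}, mrank X <= #|X|;
  mrank_mono : forall X Y : {set E}, X \subset Y -> mrank X <= mrank Y;
  mrank_submod : forall X Y : {set E},
      mrank (X :|: Y) + mrank (X :&: Y) <= mrank X + mrank Y
}.

Definition rk (E : finType) (M : matroid E) : nat := M [set: E].

Definition indep (E : finType) (M : matroid E) (I : {set E}) : bool :=
  M I == #|I|.

Definition flat (E : finType) (M : matroid E) (F : {set E}) : bool :=
  [forall e, (e \notin F) ==> (M F < M (e |: F))].

(* epsilon(M) = number of rank-one flats = number of points of the
   simplification *)
Definition eps (E : finType) (M : matroid E) : nat :=
  #|[set F : {set E} | flat M F & M F == 1]|.

Definition vrank (F : fieldType) (E : finType) m (A : E -> 'rV[F]_m)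
    (S : {set E}) : nat :=
  \rank (\sum_(e in S) <<A e>>)%MS.

Definition GFq_representable (q : nat) (E : finType) (M : matroid E) : Prop :=
  exists (F : finFieldType), #|F| = q /\
    exists (m : nat) (A : E -> 'rV[F]_m), forall S : {set E}, M S = vrank A S.

(* The affine geometry AG(h, F): ground set F^h, a set of points has rank
   equal to the linear rank of the lifted vectors (1, v) in F^(1+h). *)
Definition AG_rank (F : finFieldType) (h : nat) (S : {set 'rV[F]_h}) : nat :=
  \rank (\sum_(v in S) <<row_mx (1%:M : 'rV[F]_1) v>>)%MS.

Definition contr_rank (E : finType) (M : matroid E) (C X : {set E}) : nat :=
  M (X :|: C) - M C.

Definition contr_has_AG_restriction (E : finType) (M : matroid E)
    (C : {set E}) (h q : nat) : Prop :=
  exists (F : finFieldType), #|F| = q /\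
  exists (X : {set E}) (f : E -> 'rV[F]_h),
    [/\ [disjoint X & C],
        {in X &, injective f},
        f @: X = [set: 'rV[F]_h] &
        forall Y : {set E}, Y \subset X ->
          contr_rank M C Y = AG_rank (f @: Y)].

Definition prime_power (q : nat) : Prop :=
  exists p e : nat, [/\ prime p, 0 < e & q = p ^ e].

(* Main.v *)
Require Import Defs.
From HB Require Import structures.
From mathcomp Require Import all_boot all_order all_algebra.
From Stdlib Require Import Reals.
Set Warnings "-notation-overridden,-ambiguous-paths".
From mathcomp Require Import zify.
From Stdlib Require Import Lia Lra Psatz.
Set Implicit Arguments. Unset Strict Implicit. Unset Printing Implicit Defensive.
Import GRing.Theory.
Delimit Scope ring_scope with ring.

Section Lin.
Local Open Scope ring_scope.
Variables (F : finFieldType) (E : finType) (m : nat) (A : E -> 'rV[F]_m).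
Definition sp (S : {set E}) : 'M[F]_m := (\sum_(e in S) <<A e>>)%MS.

Lemma sp_sup e (S : {set E}) : e \in S -> (A e <= sp S)%MS.
Proof. by move=> eS; apply: (sumsmx_sup e) => //; rewrite genmxE. Qed.

Lemma sp_subP (S : {set E}) m2 (U : 'M_(m2,m)) :
  reflect (forall e, e \in S -> (A e <= U)%MS) (sp S <= U)%MS.
Proof.
apply: (iffP sumsmx_subP) => H e eS; first by rewrite -genmxE; exact: H.
by rewrite genmxE; exact: H.
Qed.

Lemma sp_mono (S1 S2 : {set E}) : S1 \subset S2 -> (sp S1 <= sp S2)%MS.
Proof. by move=> /subsetP s12; apply/sp_subP => e /s12; apply: sp_sup. Qed.

Lemma spU (S1 S2 : {set E}) : (sp (S1 :|: S2) :=: sp S1 + sp S2)%MS.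
Proof.
apply/eqmxP; rewrite /eqmx -/(_ <= _)%MS; apply/andP; split.
  apply/sp_subP => e; rewrite inE => /orP[] eS.
    exact: submx_trans (sp_sup eS) (addsmxSl _ _).
  exact: submx_trans (sp_sup eS) (addsmxSr _ _).
by rewrite addsmx_sub !sp_mono // ?subsetUl ?subsetUr.
Qed.

Lemma sp_rank_le (S : {set E}) : (\rank (sp S) <= #|S|)%nat.
Proof.
rewrite -sum1_card /sp.
apply: (big_ind2 (fun (x : 'M_m) y => \rank x <= y)%nat).
- by rewrite mxrank0.
- move=> x1 x2 y1 y2 h1 h2; apply: leq_trans (mxrank_adds_leqif _ _) _.
  exact: leq_add.
- by move=> e _; rewrite genmxE rank_leq_row.
Qed.

Lemma eqmx_subr m1 m2 m3 (X : 'M[F]_(m1,m)) (U : 'M_(m2,m)) (V : 'M_(m3,m)) :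
  (U :=: V)%MS -> (X <= U)%MS = (X <= V)%MS.
Proof.
move=> eqUV; apply/idP/idP => h; apply: submx_trans h _.
  by rewrite eqUV submx_refl.
by rewrite -eqUV submx_refl.
Qed.

Lemma card_sub n2 (U : 'M_(n2, m)) :
  #|[set v : 'rV[F]_m | (v <= U)%MS]| = expn #|F| (\rank U).
Proof.
have -> : [set v : 'rV[F]_m | (v <= U)%MS] =
   [set (z *m row_base U) | z in [set: 'rV_(\rank U)]].
  apply/setP => v; rewrite inE; apply/idP/imsetP.
    rewrite -(eqmx_subr _ (eq_row_base U)) => /submxP [z ->].
    by exists z; rewrite ?inE.
  by case=> z _ ->; rewrite -(eqmx_subr _ (eq_row_base U)) submxMl.
rewrite card_imset; last first.
  move=> z1 z2 /= hz. have h := @row_free_inj _ 1 _ _ _ (row_base_free U). apply: h. exact: hz.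
transitivity #|{: 'M[F]_(1, \rank U)}|.
  by apply: eq_card => z; rewrite !inE.
by rewrite card_mx mul1n.
Qed.

End Lin.

Section EpsBound.
Variables (F : finFieldType) (E : finType) (m : nat) (A : E -> 'rV[F]_m) (M : matroid E).
Hypothesis hM : forall S, M S = \rank (sp A S).
Local Open Scope ring_scope.

Definition Pts := [set v : 'rV[F]_m | (v != 0) && [exists e, (v <= A e)%MS]].

Lemma rank1_eq (X : {set E}) e :
  M X = 1%nat -> e \in X -> A e != 0 -> (A e :=: sp A X)%MS.
Proof.
move=> h1 eX nz; apply/eqmxP.
have [_ <-] := mxrank_leqif_eq (sp_sup A eX).
by rewrite -hM h1 rank_rV nz.
Qed.

Lemma flat_closed (X : {set E}) g :
  flat M X -> (A g <= sp A X)%MS -> g \in X.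
Proof.
move=> /forallP/(_ g) fl hg; apply: contraTT fl => gX.
rewrite negb_imply gX /= -leqNgt !hM; apply: mxrankS.
apply/sp_subP => e; rewrite !inE => /orP[/eqP->|eX] //; exact: sp_sup.
Qed.

Lemma flat_sub (X Y : {set E}) :
  flat M X -> (sp A Y <= sp A X)%MS -> Y \subset X.
Proof.
move=> fX h; apply/subsetP => g gY; apply: (flat_closed fX).
exact: submx_trans (sp_sup A gY) h.
Qed.

Definition vrep (X : {set E}) : 'rV[F]_m :=
  if [pick e in X | A e != 0] is Some e then A e else 0.

Lemma vrepP X : M X = 1%nat -> exists2 e, e \in X & (A e != 0) /\ vrep X = A e.
Proof.
rewrite /vrep => h1; case: pickP => [e /andP[eX nz]|H]; first by exists e.
have : (sp A X <= (0 : 'M_m))%MS.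
  apply/sp_subP => e eX; have := H e; rewrite eX /= => /negPn/eqP ->.
  exact: sub0mx.
by rewrite submx0 -mxrank_eq0 -hM h1.
Qed.

Lemma eps_bound : ((#|F| - 1) * eps M <= #|Pts|)%nat.
Proof.
pose Fl := [set X : {set E} | flat M X & M X == 1%nat].
pose Dom := setX [set a : F | a != 0] Fl.
have cardDom : #|Dom| = ((#|F| - 1) * eps M)%nat.
  rewrite cardsX; congr (_ * _)%nat.
  have -> : [set a : F | a != 0] = [set~ 0] by apply/setP => a; rewrite !inE.
  by rewrite cardsC1 subn1.
have inj : {in Dom &, injective (fun p : F * {set E} => p.1 *: vrep p.2)}.
  move=> [a X] [b Y]; rewrite !in_setX !inE /= => /and3P[a0 fX /eqP mX]
    /and3P[b0 fY /eqP mY] eqv.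
  have [e eX [ne ve]] := vrepP mX; have [g gY [ng vg]] := vrepP mY.
  rewrite ve vg in eqv.
  have Ag : A g = (a / b) *: A e.
    by rewrite mulrC -scalerA eqv scalerA mulVf ?scale1r.
  have Ae : A e = (b / a) *: A g.
    by rewrite mulrC -scalerA -eqv scalerA mulVf ?scale1r.
  have sYX : Y \subset X.
    apply: flat_sub fX _; rewrite -(rank1_eq mY gY ng).
    by rewrite -(eqmx_subr _ (rank1_eq mX eX ne)) Ag scalemx_sub.
  have sXY : X \subset Y.
    apply: flat_sub fY _; rewrite -(rank1_eq mX eX ne).
    by rewrite -(eqmx_subr _ (rank1_eq mY gY ng)) Ae scalemx_sub.
  have eXY : X = Y by apply/eqP; rewrite eqEsubset sXY sYX.
  subst Y; rewrite vg in ve; rewrite ve in eqv.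
  have : (a - b) *: A e == 0 by rewrite scalerBl eqv subrr.
  by rewrite scaler_eq0 (negbTE ne) orbF subr_eq0 => /eqP ->.
rewrite -cardDom -(card_in_imset inj); apply: subset_leq_card.
apply/subsetP => _ /imsetP [[a X] hd ->]; move: hd.
rewrite in_setX !inE /= => /and3P[a0 fX /eqP mX].
have [e eX [ne ve]] := vrepP mX; rewrite ve scaler_eq0 negb_or a0 ne /=.
by apply/existsP; exists e; rewrite scalemx_sub.
Qed.

End EpsBound.

Section Indep.
Variables (F : finFieldType) (E : finType) (m : nat) (A : E -> 'rV[F]_m).
Local Open Scope ring_scope.

Lemma indep_split (S1 S2 : {set E}) :
  \rank (sp A (S1 :|: S2)) = (#|S1| + #|S2|)%nat ->
  [/\ \rank (sp A S1) = #|S1|, \rank (sp A S2) = #|S2| &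
      forall v : 'rV_m, (v <= sp A S1)%MS -> (v <= sp A S2)%MS -> v = 0].
Proof.
rewrite (spU A S1 S2) => h.
have hc := mxrank_sum_cap (sp A S1) (sp A S2).
have h1 := sp_rank_le A S1; have h2 := sp_rank_le A S2.
have hcap : \rank (sp A S1 :&: sp A S2) = 0%nat by lia.
split; [lia | lia | move=> v v1 v2].
have : (v <= sp A S1 :&: sp A S2)%MS by rewrite sub_capmx v1 v2.
move/mxrankS; rewrite hcap leqn0 mxrank_eq0 => /eqP.
by [].
Qed.

Lemma indep_sub (C S : {set E}) :
  \rank (sp A C) = #|C| -> S \subset C -> \rank (sp A S) = #|S|.
Proof.
move=> hC sSC.
have eC : S :|: (C :\: S) = C.
  apply/setP => x; rewrite !inE; case xS: (x \in S) => //=.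
  by rewrite (subsetP sSC).
have cC : #|C| = (#|S| + #|C :\: S|)%nat.
  by rewrite cardsD (setIidPr sSC) subnKC // subset_leq_card.
rewrite cC -{1}eC in hC.
by case: (indep_split hC).
Qed.

End Indep.

Section Blocks.
Variables (E : finType) (C : {set E}) (h k : nat).
Hypothesis hCard : #|C| = (h * k)%nat.

Definition sC := enum C.
Definition blk j := [set x in take h (drop (j * h) sC)].
Definition G j := [set x in drop (j * h) sC].

Lemma card_seqset (t : seq E) : uniq t -> #|[set x in t]| = size t.
Proof. by move=> u; rewrite cardsE; apply/card_uniqP. Qed.

Lemma size_sC : size sC = (h * k)%nat.
Proof. by rewrite /sC -cardE hCard. Qed.

Lemma G_split j : G j = blk j :|: G j.+1.
Proof.
apply/setP => x; rewrite /G /blk !inE mulSn -drop_drop.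
by rewrite -{1}(cat_take_drop h (drop (j * h) sC)) mem_cat.
Qed.

Lemma card_G j : #|G j| = (h * k - j * h)%nat.
Proof.
by rewrite card_seqset ?drop_uniq ?enum_uniq // size_drop size_sC.
Qed.

Lemma card_blk j : (j < k)%nat -> #|blk j| = h.
Proof.
move=> jk; rewrite card_seqset ?take_uniq ?drop_uniq ?enum_uniq //.
rewrite size_takel // size_drop size_sC.
have : (j.+1 * h <= k * h)%nat by rewrite leq_mul2r jk orbT.
rewrite mulSn mulnC; lia.
Qed.

Lemma G_sub j : G j \subset C.
Proof. by apply/subsetP => x; rewrite inE => /mem_drop; rewrite mem_enum. Qed.

Lemma blk_sub j : blk j \subset G j.
Proof. by rewrite G_split subsetUl. Qed.

Lemma G0 : G 0 = C.
Proof. by apply/setP => x; rewrite inE mul0n drop0 mem_enum. Qed.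

Lemma Gk : G k = set0.
Proof.
apply/setP => x; rewrite inE drop_oversize ?inE // size_sC mulnC leqnn //.
Qed.

Lemma G_mono j : G j.+1 \subset G j.
Proof. by rewrite (G_split j) subsetUr. Qed.

Lemma card_split j : (j < k)%nat -> #|G j| = (#|blk j| + #|G j.+1|)%nat.
Proof.
move=> jk; rewrite !card_G card_blk // mulSn.
have : (j.+1 * h <= k * h)%nat by rewrite leq_mul2r jk orbT.
rewrite mulSn mulnC; lia.
Qed.

End Blocks.

Section SubSub.
Local Open Scope ring_scope.
Lemma submx_subr (F : fieldType) m1 m2 n (a b : 'M[F]_(m1, n)) (U : 'M_(m2, n)) :
  (a <= U)%MS -> (b <= U)%MS -> (a - b <= U)%MS.
Proof. by move=> ha hb; apply: addmx_sub => //; rewrite eqmx_opp. Qed.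
End SubSub.

Section Core.
Variables (F : finFieldType) (E : finType) (m : nat) (A : E -> 'rV[F]_m).
Variables (C : {set E}) (h k : nat).
Hypothesis hCard : #|C| = (h * k)%nat.
Hypothesis hC : \rank (sp A C) = #|C|.
Local Open Scope ring_scope.

Definition L := sp A C.
Definition Lb j := sp A (blk C h j).
Definition Lg j := sp A (G C h j).
Definition Lset := [set v : 'rV[F]_m | (v <= L)%MS].
Definition Sj j := [set v : 'rV[F]_m | [exists p in Pts A, (v - p <= Lg j)%MS]].
Definition N j := Sj j :\: Lset.

Lemma Lg_L j : (Lg j <= L)%MS.
Proof. exact/sp_mono/G_sub. Qed.
Lemma Lb_Lg j : (Lb j <= Lg j)%MS.
Proof. exact/sp_mono/blk_sub. Qed.
Lemma Lb_L j : (Lb j <= L)%MS.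
Proof. exact: submx_trans (Lb_Lg j) (Lg_L j). Qed.
Lemma Lg_mono j : (Lg j.+1 <= Lg j)%MS.
Proof. exact/sp_mono/G_mono. Qed.

Lemma blk_indep j : (j < k)%nat ->
  [/\ \rank (Lb j) = h, \rank (Lg j.+1) = #|G C h j.+1| &
      forall v : 'rV_m, (v <= Lb j)%MS -> (v <= Lg j.+1)%MS -> v = 0].
Proof.
move=> jk.
have hG := indep_sub hC (G_sub C h j).
rewrite (card_split hCard jk) (G_split C h j) in hG.
have [h1 h2 h3] := indep_split hG.
by split => //; rewrite /Lb h1 (card_blk hCard jk).
Qed.

Lemma shiftN j u y : (u <= Lb j)%MS -> y \in N j.+1 -> y - u \in N j.
Proof.
move=> uL; rewrite !inE => /andP[yL /existsP[p /andP[pP yp]]].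
apply/andP; split.
  apply: contra yL => yuL.
  by rewrite -(subrK u y); apply: addmx_sub => //; exact: submx_trans uL (Lb_L j).
apply/existsP; exists p; rewrite pP /=.
have -> : y - u - p = (y - p) - u by rewrite addrAC.
apply: submx_subr; first exact: submx_trans yp (Lg_mono j).
exact: submx_trans uL (Lb_Lg j).
Qed.

Definition fails j := forall x : 'rV[F]_m, ~~ (x <= L)%MS ->
  exists2 u, (u <= Lb j)%MS & x + u \notin Sj j.+1.

Lemma step j : (j < k)%nat -> fails j ->
  (#|N j.+1| * expn #|F| h <= (expn #|F| h - 1) * #|N j|)%nat.
Proof.
move=> jk fail.
have [rLb _ _] := blk_indep jk.
pose Lbset := [set u : 'rV[F]_m | (u <= Lb j)%MS].
have cLb : #|Lbset| = expn #|F| h by rewrite card_sub rLb.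
pose fib x := [set u in Lbset | x + u \in N j.+1].
have sum1 : (\sum_(x in N j) #|fib x| <= #|N j| * (expn #|F| h - 1))%nat.
  rewrite -sum_nat_const; apply: leq_sum => x xN.
  have xL : ~~ (x <= L)%MS by move: xN; rewrite !inE => /andP[].
  have [u0 u0L u0S] := fail x xL.
  have : fib x \subset Lbset :\ u0.
    apply/subsetP => u; rewrite /fib in_set => /andP[uL xuN].
    rewrite in_setD1 uL andbT; apply: contraNneq u0S => <-.
    by move: xuN; rewrite in_setD => /andP[].
  move/subset_leq_card => hle; have := cardsD1 u0 Lbset.
  rewrite [u0 \in Lbset]inE u0L cLb /=; move=> ->; rewrite add1n subn1 /=; exact: hle.
have sum2 : \sum_(x in N j) #|fib x| = (#|Lbset| * #|N j.+1|)%nat.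
  transitivity (\sum_(x in N j) \sum_(u in Lbset) (nat_of_bool (x + u \in N j.+1))).
    apply: eq_bigr => x _; rewrite -sum1_card [LHS]big_mkcond [RHS]big_mkcond.
    apply: eq_bigr => u _; rewrite /fib in_set.
    by case: (u \in Lbset); case: (x + u \in N j.+1).
  rewrite exchange_big /= -sum_nat_const; apply: eq_bigr => u uL.
  have uL' : (u <= Lb j)%MS by move: uL; rewrite inE.
  transitivity #|[set x in N j | x + u \in N j.+1]|.
    rewrite -sum1_card [RHS]big_mkcond [LHS]big_mkcond.
    apply: eq_bigr => x _; rewrite in_set.
    by case: (x \in N j); case: (x + u \in N j.+1).
  have -> : [set x in N j | x + u \in N j.+1] = [set y - u | y in N j.+1].
    apply/setP => x; rewrite in_set; apply/andP/imsetP.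
      by case=> _ xu; exists (x + u) => //; rewrite addrK.
    case=> y yN ->; split; first exact: shiftN.
    by rewrite subrK.
  by rewrite card_imset //; apply: subIr.
have := sum1; rewrite sum2 cLb => H.
by rewrite mulnC (mulnC (expn _ _ - 1)%nat).
Qed.

Lemma iter_bound : (forall j, (j < k)%nat -> fails j) ->
  forall j, (j <= k)%nat ->
  (#|N j| * expn #|F| (h * j) <= expn (expn #|F| h - 1) j * #|N 0|)%nat.
Proof.
move=> fl; elim=> [|j IH] jk; first by rewrite muln0 !expn0 muln1 mul1n.
have jk' : (j < k)%nat by [].
have := step jk' (fl j jk'); have := IH (ltnW jk') => h1 h2.
rewrite mulnS expnD mulnA expnS -mulnA.
rewrite mulnA; apply: leq_trans (leq_mul h2 (leqnn _)) _.
by rewrite -!mulnA; apply: leq_mul.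
Qed.

Lemma Pts_cap_le n2 (U : 'M_(n2, m)) :
  (#|Pts A :&: [set v : 'rV[F]_m | (v <= U)%MS]| <= expn #|F| (\rank U) - 1)%nat.
Proof.
set Us := [set v : 'rV[F]_m | (v <= U)%MS].
have : Pts A :&: Us \subset Us :\ 0.
  apply/subsetP => v; rewrite !inE => /andP[/andP[nz _] vU].
  by rewrite nz vU.
move/subset_leq_card => hle; have := cardsD1 0 Us.
rewrite [0 \in Us]inE sub0mx card_sub => ->; rewrite add1n subn1 /=; exact: hle.
Qed.

Lemma L_W : (L <= sp A setT)%MS.
Proof. exact/sp_mono/subsetT. Qed.

Lemma card_Lset : #|Lset| = expn #|F| (h * k).
Proof. by rewrite card_sub /L hC hCard. Qed.

Lemma PL_le : (#|Pts A :\: Lset| <= #|N k|)%nat.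
Proof.
apply/subset_leq_card/setSD/subsetP => p pP; rewrite inE.
by apply/existsP; exists p; rewrite pP subrr sub0mx.
Qed.

Lemma N0_le : (#|N 0| <= expn #|F| (\rank (sp A setT)) - expn #|F| (h * k))%nat.
Proof.
set Ws := [set v : 'rV[F]_m | (v <= sp A setT)%MS].
have sub : N 0 \subset Ws :\: Lset.
  apply/setSD/subsetP => v; rewrite !inE => /existsP[p /andP[pP vp]].
  rewrite -(subrK p v); apply: addmx_sub.
    exact: submx_trans vp (submx_trans (Lg_L 0) L_W).
  move: pP; rewrite inE => /andP[_ /existsP[e pe]].
  by apply: submx_trans pe _; apply: sp_sup; rewrite inE.
apply: leq_trans (subset_leq_card sub) _.
rewrite cardsD card_sub -card_Lset; apply: leq_sub2l.
apply: subset_leq_card; apply/subsetP => v; rewrite !inE => vL.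
by rewrite vL (submx_trans vL L_W).
Qed.

Lemma Pts_split :
  (#|Pts A| <= #|Pts A :\: Lset| + (expn #|F| (h * k) - 1))%nat.
Proof.
rewrite -(cardsID Lset (Pts A)) addnC leq_add2l.
by have := Pts_cap_le L; rewrite /L hC hCard.
Qed.

Lemma fail_bound : (forall j, (j < k)%nat -> fails j) ->
  (#|Pts A :\: Lset| * expn #|F| (h * k) <=
     expn (expn #|F| h - 1) k * (expn #|F| (\rank (sp A setT)) - expn #|F| (h * k)))%nat.
Proof.
move=> fl; have := iter_bound fl (leqnn k) => H.
apply: leq_trans (leq_mul PL_le (leqnn _)) _.
apply: leq_trans H _; exact: leq_mul (leqnn _) N0_le.
Qed.

Section Construct.
Variable j : nat.
Hypothesis jk : (j < k)%nat.
Variable x : 'rV[F]_m.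
Hypothesis xL : ~~ (x <= L)%MS.
Hypothesis xS : forall u, (u <= Lb j)%MS -> x + u \in Sj j.+1.

Let rLb : \rank (Lb j) = h.
Proof. by case: (blk_indep jk). Qed.

Definition Bm : 'M[F]_(h, m) := castmx (rLb, erefl m) (row_base (Lb j)).

Lemma Bm_eq : (Bm :=: Lb j)%MS.
Proof. exact: eqmx_trans (eqmx_cast _ _) (eq_row_base _). Qed.

Lemma Bm_free : row_free Bm.
Proof. by rewrite row_free_castmx row_base_free. Qed.

Lemma vB_sub (v : 'rV_h) : (v *m Bm <= Lb j)%MS.
Proof. by rewrite -(eqmx_subr _ Bm_eq) submxMl. Qed.

Lemma key a (z : 'rV_h) : ((a *: x + z *m Bm)%ring <= Lg j.+1)%MS -> a = 0 /\ z = 0.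
Proof.
move=> H.
have zB := vB_sub z.
have a0 : a = 0.
  apply/eqP; apply: contraNT xL => an0.
  have : (a *: x <= L)%MS.
    rewrite -(addrK (z *m Bm) (a *: x)); apply: submx_subr.
      exact: submx_trans H (Lg_L _).
    exact: submx_trans zB (Lb_L _).
  by move/(scalemx_sub a^-1); rewrite scalerA mulVf // scale1r.
split => //; move: H; rewrite a0 scale0r add0r => H.
have [_ _ cap] := blk_indep jk.
by have := cap _ zB H => /eqP; rewrite mulmx_free_eq0 ?Bm_free // => /eqP.
Qed.

Definition Phi : 'M[F]_(1 + h, m) := col_mx x Bm.

Lemma Phi_key (r : 'rV_(1 + h)) : (r *m Phi <= Lg j.+1)%MS -> r = 0.
Proof.
move=> H.
have [a0 z0] : lsubmx r 0 0 = 0 /\ rsubmx r = 0.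
  apply: key; by rewrite -mul_scalar_mx -mx11_scalar -mul_row_col hsubmxK.
rewrite -[r]hsubmxK z0.
have -> : lsubmx r = 0 by apply/rowP => i; rewrite ord1 a0 mxE.
by rewrite row_mx0.
Qed.

Lemma Phi_free : row_free Phi.
Proof. by apply: inj_row_free => v hv; apply: Phi_key; rewrite hv sub0mx. Qed.

Lemma rowPhi (v : 'rV_h) : row_mx (1%:M : 'rV[F]_1) v *m Phi = x + v *m Bm.
Proof. by rewrite mul_row_col mul1mx. Qed.

Lemma ex_g (v : 'rV_h) : exists e, [exists p : 'rV[F]_m,
  [&& p != 0, (p <= A e)%MS & ((x + v *m Bm - p)%ring <= Lg j.+1)%MS]].
Proof.
have := xS (vB_sub v); rewrite inE => /existsP[p /andP[pP wp]].
move: pP; rewrite inE => /andP[nz /existsP[e pe]].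
by exists e; apply/existsP; exists p; rewrite nz pe wp.
Qed.

Definition g v := xchoose (ex_g v).

Lemma gP v : exists p : 'rV[F]_m,
  [/\ p != 0, (p <= A (g v))%MS & ((x + v *m Bm - p)%ring <= Lg j.+1)%MS].
Proof.
have := xchooseP (ex_g v); rewrite -/(g v) => /existsP[p /and3P[a b c]].
by exists p.
Qed.

Lemma rowv_eq (p : 'rV[F]_m) e : p != 0 -> (p <= A e)%MS -> (A e <= p)%MS.
Proof.
move=> nz pe; have [le <-] := mxrank_leqif_sup pe.
by rewrite eqn_leq le /= (rank_rV p) nz rank_leq_row.
Qed.

Lemma g_inj : injective g.
Proof.
move=> v v' eqg.
have [p [nz pe wp]] := gP v; have [p' [nz' pe' wp']] := gP v'.
rewrite -eqg in pe'.
have : (p' <= p)%MS := submx_trans pe' (rowv_eq nz pe).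
case/submxP => D pD.
set c := D 0 0.
have pD' : p' = c *: p by rewrite pD (mx11_scalar D) mul_scalar_mx.
pose r := row_mx (1%:M : 'rV[F]_1) v' - c *: row_mx (1%:M : 'rV[F]_1) v.
have rPhi : r *m Phi = (x + v' *m Bm) - c *: (x + v *m Bm).
  by rewrite mulmxBl -scalemxAl !rowPhi.
have r0 : r = 0.
  apply: Phi_key; rewrite rPhi.
  have -> : (x + v' *m Bm) - c *: (x + v *m Bm) =
            (x + v' *m Bm - p') - c *: (x + v *m Bm - p).
    by rewrite pD' scalerBr opprB addrA subrK.
  apply: submx_subr => //; exact: scalemx_sub.
move: r0; rewrite /r scale_row_mx opp_row_mx add_row_mx => /eqP.
rewrite row_mx_eq0 => /andP[/eqP h1 /eqP h2].
have c1 : c = 1.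
  have := congr1 (fun Mx : 'M[F]_1 => Mx 0 0) h1; rewrite !mxE /= mulr1n mulr1.
  by move/eqP; rewrite subr_eq0 => /eqP <-.
by move: h2; rewrite c1 scale1r => /eqP; rewrite subr_eq0 => /eqP.
Qed.

Definition Xs := [set g v | v in [set: 'rV[F]_h]].
Definition fE (e : E) : 'rV[F]_h := odflt 0 [pick v | g v == e].

Lemma fE_g v : fE (g v) = v.
Proof.
rewrite /fE; case: pickP => [v' /eqP/g_inj -> //|H].
by have := H v; rewrite eqxx.
Qed.

Variable M : matroid E.
Hypothesis hM : forall S, M S = \rank (sp A S).

Lemma construct : contr_has_AG_restriction M (G C h j.+1) h #|F|.
Proof.
exists F; split => //; exists Xs, fE; split.
- rewrite disjoint_subset; apply/subsetP => _ /imsetP[v _ ->].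
  rewrite inE /=; apply/negP => gG.
  have [p [nz pe wp]] := gP v.
  have pG : (p <= Lg j.+1)%MS := submx_trans pe (sp_sup A gG).
  move: xL; apply/negP; rewrite negbK.
  rewrite -(addrK (v *m Bm) x) -(subrK p (x + v *m Bm)).
  apply: submx_subr; last exact: submx_trans (vB_sub v) (Lb_L j).
  apply: submx_trans (Lg_L j.+1); exact: addmx_sub.
- by move=> _ _ /imsetP[v _ ->] /imsetP[v' _ ->]; rewrite !fE_g => ->.
- apply/setP => v; rewrite inE; apply/imsetP; exists (g v); last by rewrite fE_g.
  by apply/imsetP; exists v; rewrite ?inE.
move=> Y sYX; rewrite /contr_rank !hM /AG_rank.
set R := (\sum_(v in fE @: Y) <<row_mx (1%:M : 'rV[F]_1) v>>)%MS.
have eq1 : (sp A (Y :|: G C h j.+1) :=: R *m Phi + Lg j.+1)%MS.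
  apply: eqmx_trans (spU A _ _) _.
  apply/eqmxP/andP; split; rewrite addsmx_sub; apply/andP; split.
  + apply/sp_subP => e eY.
    have := subsetP sYX e eY; case/imsetP => v _ ev.
    have [p [nz pe wp]] := gP v.
    rewrite ev; apply: submx_trans (rowv_eq nz pe) _.
    have -> : p = (x + v *m Bm) - (x + v *m Bm - p) by rewrite opprB addrC subrK.
    apply: submx_subr; last exact: submx_trans wp (addsmxSr _ _).
    apply: submx_trans (addsmxSl _ _); rewrite -rowPhi; apply: submxMr.
    apply: (sumsmx_sup v); last by rewrite genmxE.
    by apply/imsetP; exists e => //; rewrite ev fE_g.
  + exact: addsmxSr.
  + have := sumsmxMr_gen (fun v => v \in fE @: Y)
    (fun v => <<row_mx (1%:M : 'rV[F]_1) v>>%MS) Phi.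
    move/eqmxP/andP => [E1 _]; apply: submx_trans E1 _.
    apply/sumsmx_subP => _ /imsetP[e eY ->].
    rewrite genmxE (eqmxMr _ (genmxE _)).
    have := subsetP sYX e eY; case/imsetP => v0 _ ev.
    have [p [nz pe wp]] := gP v0.
    rewrite ev fE_g rowPhi -(subrK p (x + v0 *m Bm)); apply: addmx_sub.
      exact: submx_trans wp (addsmxSr _ _).
    apply: submx_trans pe (submx_trans (sp_sup A _) (addsmxSl _ _)).
    by rewrite -ev.
  + exact: addsmxSr.
have capz : \rank (R *m Phi :&: Lg j.+1) = 0%nat.
  apply/eqP; rewrite mxrank_eq0 -submx0; apply/row_subP => i.
  have z1 := submx_trans (row_sub i _) (capmxSl (R *m Phi) (Lg j.+1)).
  have z2 := submx_trans (row_sub i _) (capmxSr (R *m Phi) (Lg j.+1)).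
  case/submxP: z1 => D zD; rewrite zD mulmxA in z2 *.
  by rewrite (Phi_key z2) mul0mx sub0mx.
have rk1 := eqmx_rank (introT eqmxP eq1).
have := mxrank_sum_cap (R *m Phi) (Lg j.+1).
rewrite capz addn0 mxrankMfree ?Phi_free // => H.
by rewrite rk1 H addnK.
Qed.

End Construct.

End Core.

Section RealPart.
Local Open Scope R_scope.

Lemma pow_bern (x : R) (k : nat) : 0 <= x <= 1 -> (1 - x)^k * (1 + INR k * x) <= 1.
Proof.
move=> hx; induction k as [|k IH].
  simpl; lra.
rewrite S_INR /=.
have h0 : 0 <= (1 - x)^k by apply: pow_le; lra.
have e : (1 - x) * (1 - x) ^ k * (1 + (INR k + 1) * x) =
         (1 - x)^k * ((1 + INR k * x) - x * x * (1 + INR k)) by ring.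
rewrite e.
have hk : 0 <= INR k := pos_INR k.
have : 0 <= x * x * (1 + INR k) by apply: Rmult_le_pos; nra.
nra.
Qed.

Lemma pow_le1 (x : R) (k : nat) : 0 <= x <= 1 -> (1 <= k)%nat -> (1 - x)^k <= 1 - x.
Proof.
move=> hx; induction k as [|k IH]; first lia.
move=> _; destruct k as [|k]; first (simpl; lra).
have := IH ltac:(lia) => H.
rewrite /= in H *.
have h0 : 0 <= (1 - x) * (1 - x) ^ k by apply: Rmult_le_pos; [lra | apply: pow_le; lra].
nra.
Qed.

Lemma beta_bound (al x b : R) (k : nat) :
  0 < al <= 1 -> 0 < x <= 1/2 -> (1 <= k)%nat ->
  INR k * x >= 2 * (1/al - 1) -> b = (1 - x)^k ->
  b <= al * (1 - x * x / 2).
Proof.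
move=> ha hx hk hkx eb; rewrite eb.
have h1 := @pow_le1 x k ltac:(lra) hk.
have h2 := @pow_bern x k ltac:(lra).
have h0 : 0 <= (1 - x)^k by apply: pow_le; lra.
rewrite -eb in h1 h2 h0 *.
destruct (Rle_lt_dec (1 - x) (al * (1 - x * x / 2))) as [c|c]; first lra.
have e : INR k * x >= 2 / al - 2.
  have : 2 * (1/al - 1) = 2 / al - 2 by field; lra.
  lra.
have h3 : b * (2 / al - 1) <= 1.
  have : b * (2/al - 1) <= b * (1 + INR k * x) by apply: Rmult_le_compat_l; lra.
  lra.
have h4 : b * (2 - al) <= al.
  have : b * (2 - al) = al * (b * (2 / al - 1)) by field; lra.
  move=> ->; have : al * (b * (2 / al - 1)) <= al * 1 by apply: Rmult_le_compat_l; lra.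
  lra.
have h5 : 1 <= (2 - al) * (1 - x * x / 2) by nra.
nra.
Qed.

Lemma real_final (al q Q T D PL nP ep b : R) (k : nat) :
  0 < al -> 2 <= q -> 2 <= Q -> 2 <= T -> 1 <= D -> D <= T ->
  T >= D * Q^2 * (2/al) ->
  (1 <= k)%nat -> INR k >= 2 * Q * (1/al - 1) ->
  ep >= al * ((T - 1) / (q - 1)) ->
  (q - 1) * ep <= nP -> nP <= T - 1 -> nP <= PL + (D - 1) ->
  PL * D <= b * (T - D) ->
  b = (Q - 1)^k -> D = Q^k -> False.
Proof.
move=> ha hq hQ hT hD hDT hTn hk hkQ hep h1 h2 h3 h4 eb eD.
have hep' : (q - 1) * ep >= al * (T - 1).
  have : (q - 1) * (al * ((T - 1) / (q - 1))) = al * (T - 1) by field; lra.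
  move=> e; rewrite -e; apply: Rle_ge; apply: Rmult_le_compat_l; lra.
have hal1 : al <= 1.
  have : al * (T - 1) <= 1 * (T - 1) by lra.
  move=> H; apply: (Rmult_le_reg_r (T - 1)); lra.
set x := 1 / Q.
have hx : 0 < x <= 1/2.
  split; first (apply: Rdiv_lt_0_compat; lra).
  rewrite /x; apply: Rmult_le_reg_r (_ : 0 < 2 * Q) _; first lra.
  have -> : 1 / Q * (2 * Q) = 2 by field; lra.
  lra.
set be := (1 - x)^k.
have hbe : be * D = b.
  rewrite /be eD eb -Rpow_mult_distr; congr (_ ^ _); rewrite /x; field; lra.
have hkx : INR k * x >= 2 * (1 / al - 1).
  rewrite /x; have : INR k * (1/Q) = INR k / Q by field; lra.
  move=> ->; apply: Rle_ge; apply: (Rmult_le_reg_r Q); first lra.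
  have -> : INR k / Q * Q = INR k by field; lra.
  lra.
have hb := @beta_bound al x be k (conj ha hal1) hx hk hkx (erefl be).
have hbe0 : 0 <= be by apply: pow_le; lra.
have hPL : PL <= be * (T - D).
  apply: (Rmult_le_reg_r D); first lra.
  have -> : be * (T - D) * D = (be * D) * (T - D) by ring.
  by rewrite hbe.
have hxQ : x * Q = 1 by rewrite /x; field; lra.
have hab : al - be >= al * (x * x / 2) by lra.
have hT2 : (al - be) * T >= D.
  have e1 : al * (x * x / 2) * (D * Q^2 * (2/al)) = D.
    have -> : D * Q^2 * (2/al) = (D / al) * 2 * (x * Q) * (x * Q) / (x * x).
      field; repeat split; lra.
    rewrite hxQ; field; repeat split; lra.
  have hpos : 0 <= al * (x * x / 2) by apply: Rmult_le_pos; nra.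
  have : al * (x * x / 2) * T <= (al - be) * T by apply: Rmult_le_compat_r; lra.
  have : al * (x * x / 2) * (D * Q ^ 2 * (2 / al)) <= al * (x * x / 2) * T.
    by apply: Rmult_le_compat_l; lra.
  lra.
have hbD : 0 < be * D.
  rewrite hbe eb; apply: pow_lt; lra.
nra.
Qed.

Lemma exp_bound (al qR : R) (n N : nat) : 0 < al -> 2 <= qR ->
  INR n >= INR N + ln (2 / al) / ln qR -> qR ^ n >= qR ^ N * (2 / al).
Proof.
move=> ha hq hn.
have lq : 0 < ln qR by rewrite -ln_1; apply: ln_increasing; lra.
destruct (Rlt_or_le (qR ^ n) (qR ^ N * (2 / al))) as [c|c]; last lra.
exfalso.
have hp : 0 < qR ^ n by apply: pow_lt; lra.
have hp2 : 0 < qR ^ N by apply: pow_lt; lra.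
have h2a : 0 < 2 / al by apply: Rdiv_lt_0_compat; lra.
have := ln_increasing _ _ hp c.
rewrite ln_mult // !ln_pow; try lra.
have e : (INR N + ln (2 / al) / ln qR) * ln qR = INR N * ln qR + ln (2 / al).
  by field; lra.
have : INR n * ln qR >= (INR N + ln (2 / al) / ln qR) * ln qR.
  by apply: Rle_ge; apply: Rmult_le_compat_r; lra.
lra.
Qed.

End RealPart.

Lemma INR_expn (a n : nat) : INR (expn a n) = (INR a ^ n)%R.
Proof.
elim: n => [|n IH]; first by rewrite expn0.
by rewrite expnS mult_INR IH.
Qed.

Theorem lemma7p1 (alpha : R) (q n h k : nat) :
  (0 < alpha)%R -> prime_power q ->
  (0 < n)%N -> (0 < h)%N -> (0 < k)%N ->
  (INR n >= INR ((2 + k) * h) + ln (2 / alpha) / ln (INR q))%R ->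
  (INR k >= 2 * INR (q ^ h) * (1 / alpha - 1))%R ->
  forall (E : finType) (M : matroid E),
    GFq_representable q M ->
    (n <= rk M)%N ->
    (INR (eps M) >= alpha * ((INR (q ^ rk M) - 1) / (INR q - 1)))%R ->
    forall C : {set E}, indep M C -> #|C| = (h * k)%N ->
      exists C' : {set E}, C' \subset C /\ contr_has_AG_restriction M C' h q.
Proof.
move=> hal [p [e [pp e0 qe]]] hn hh hk Hn Hk E M [F [hF [m [A hA]]]] hr Heps
  C hCi hCc.
have q2 : (2 <= q)%N.
  rewrite qe; case: e e0 {qe} => // e' _; rewrite expnS.
  have := expn_gt0 p e'; have := prime_gt1 pp; rewrite (prime_gt0 pp) /=; nia.
have hM : forall S, M S = \rank (sp A S) by move=> S; rewrite hA.
have hC : \rank (sp A C) = #|C| by rewrite -hM; apply/eqP.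
have hrk : rk M = \rank (sp A setT) by rewrite /rk hM.
case: (boolP [exists j : 'I_k, [exists x : 'rV[F]_m, ~~ (x <= L A C)%MS &&
   [forall u : 'rV[F]_m, (u <= Lb A C h j)%MS ==> ((x + u)%ring \in Sj A C h j.+1)]]]).
  case/existsP => j /existsP[x /andP[xL /forallP xS]].
  exists (G C h j.+1); split; first exact: G_sub.
  rewrite -hF; apply: (construct hCc hC (ltn_ord j) xL _ hM).
  by move=> u uL; exact: (implyP (xS u) uL).
move=> nok.
have fl : forall j, (j < k)%N -> fails A C h j.
  move=> j jk x xL; move: nok; rewrite negb_exists => /forallP/(_ (Ordinal jk)).
  rewrite negb_exists => /forallP/(_ x); rewrite xL /= negb_forall.
  by case/existsP => u; rewrite negb_imply => /andP[uL uS]; exists u.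
exfalso.
set r := \rank (sp A setT).
have ha := eps_bound hM.
have hb : (#|Pts A| <= expn #|F| r - 1)%N.
  have := Pts_cap_le A (sp A setT); rewrite (setIidPl _) //.
  apply/subsetP => v; rewrite !inE => /andP[_ /existsP[e1 pe]].
  by apply: submx_trans pe _; apply: sp_sup; rewrite inE.
have hc := Pts_split hCc hC.
have hd := fail_bound hCc hC fl.
have hkr : (h * k <= r)%N.
  by have := mxrankS (L_W A C); rewrite /L hC hCc.
rewrite hF in ha hb hc hd.
have hnr : (n <= r)%N by rewrite /r -hrk.
have qR2 : (2 <= INR q)%R by have := le_INR _ _ (leP q2).
have eQ : (1 <= expn q h)%N by rewrite expn_gt0 (leq_trans _ q2).
have eT : (1 <= expn q r)%N by rewrite expn_gt0 (leq_trans _ q2).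
have eD : (1 <= expn q (h * k))%N by rewrite expn_gt0 (leq_trans _ q2).
have eDT : (expn q (h * k) <= expn q r)%N by rewrite leq_pexp2l // (leq_trans _ q2).
apply: (@real_final alpha (INR q) (INR q ^ h) (INR q ^ r) (INR q ^ (h * k))
   (INR #|Pts A :\: Lset A C|) (INR #|Pts A|) (INR (eps M))
   ((INR q ^ h - 1) ^ k) k) => //.
- have := Rle_pow (INR q) 1 h ltac:(lra) (leP hh); rewrite pow_1; lra.
- have := Rle_pow (INR q) 1 r ltac:(lra) (leP (leq_trans hn hnr)); rewrite pow_1; lra.
- apply: pow_R1_Rle; lra.
- apply: Rle_pow; [lra | exact/leP].
- have -> : (INR q ^ (h * k) * (INR q ^ h) ^ 2 = INR q ^ ((2 + k) * h))%R.
    by rewrite -pow_mult -pow_add; f_equal; lia.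
  apply: Rge_trans (exp_bound hal qR2 Hn).
  apply: Rle_ge; apply: Rle_pow; [lra | exact/leP].
- by rewrite pow_INR in Hk.
- by rewrite pow_INR hrk in Heps.
- have := le_INR _ _ (leP ha).
  by rewrite mult_INR (minus_INR _ _ (leP (ltnW q2))).
- have := le_INR _ _ (leP hb).
  by rewrite (minus_INR _ _ (leP eT)) INR_expn.
- have := le_INR _ _ (leP hc).
  by rewrite plus_INR (minus_INR _ _ (leP eD)) INR_expn.
- have := le_INR _ _ (leP hd).
  rewrite !mult_INR (minus_INR _ _ (leP eDT)) (INR_expn (expn q h - 1)).
  by rewrite (minus_INR _ _ (leP eQ)) !INR_expn.
- by rewrite pow_mult.
Qed.
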